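(* Let $0\le\epsilon<1$ and let $\rho^{AB}$ be a quantum state on a finite-dimensional bipartite system $AB$ with marginals $\rho^A,\rho^B$. Then $$I^\epsilon_H(A:B)_\rho\ \le\ 2\log_2\min\{|A|,|B|\}+3\log_2\frac{1}{1-\epsilon}+6\log_2 3-4,$$ where $|A|,|B|$ are the dimensions of the systems.
   Context: For quantum states $\alpha,\beta$ on the same finite-dimensional Hilbert space and $0\le\epsilon<1$, $D^\epsilon_H(\alpha\|\beta):=\max_\Pi -\log_2\operatorname{Tr}[\Pi\beta]$, the maximum over POVM elements $0\le\Pi\le\mathbb{1}$ with $\operatorname{Tr}[\Pi\alpha]\ge 1-\epsilon$. The hypothesis testing mutual information is $I^\epsilon_H(A:B)_\rho:=D^\epsilon_H(\rho^{AB}\|\rho^A\otimes\rho^B)$. *)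

(* Defs.v *)
From Stdlib Require Import Reals List.
Import ListNotations.
Open Scope R_scope.

Record C := mkC { re : R; im : R }.
Definition C0 : C := mkC 0 0.
Definition Cadd (x y : C) : C := mkC (re x + re y) (im x + im y).
Definition Cmul (x y : C) : C :=
  mkC (re x * re y - im x * im y) (re x * im y + im x * re y).
Definition Cconj (x : C) : C := mkC (re x) (- im x).

Definition csum (n : nat) (f : nat -> C) : C :=
  fold_right Cadd C0 (map f (seq 0 n)).

(** Operators on a d-dimensional system: entries M i j for i, j < d
    (entries outside this range are irrelevant). *)
Definition op := nat -> nat -> C.
(** Operators on the bipartite system AB = A (x) B, indexed by
    X a b a' b' = <a b| X |a' b'>. *)
Definition op2 := nat -> nat -> nat -> nat -> C.

(** Positive semidefiniteness: v^* X v is real and nonnegative for all v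
    (over C this is the usual definition and implies hermiticity). *)
Definition qform2 (dA dB : nat) (X : op2) (v : nat -> nat -> C) : C :=
  csum dA (fun a => csum dB (fun b => csum dA (fun a' => csum dB (fun b' =>
    Cmul (Cconj (v a b)) (Cmul (X a b a' b') (v a' b')))))).
Definition psd2 (dA dB : nat) (X : op2) : Prop :=
  forall v, im (qform2 dA dB X v) = 0 /\ 0 <= re (qform2 dA dB X v).

Definition id2 : op2 := fun a b a' b' =>
  if andb (Nat.eqb a a') (Nat.eqb b b') then mkC 1 0 else C0.
Definition sub2 (X Y : op2) : op2 := fun a b a' b' =>
  Cadd (X a b a' b') (mkC (- re (Y a b a' b')) (- im (Y a b a' b'))).

Definition tr2 (dA dB : nat) (X : op2) : C :=
  csum dA (fun a => csum dB (fun b => X a b a b)).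

Definition is_state2 (dA dB : nat) (rho : op2) : Prop :=
  psd2 dA dB rho /\ tr2 dA dB rho = mkC 1 0.

Definition povm_elem2 (dA dB : nat) (Pi : op2) : Prop :=
  psd2 dA dB Pi /\ psd2 dA dB (sub2 id2 Pi).

Definition trmul2 (dA dB : nat) (X Y : op2) : C :=
  csum dA (fun a => csum dB (fun b => csum dA (fun a' => csum dB (fun b' =>
    Cmul (X a b a' b') (Y a' b' a b))))).

Definition margA (dA dB : nat) (rho : op2) : op :=
  fun a a' => csum dB (fun b => rho a b a' b).
Definition margB (dA dB : nat) (rho : op2) : op :=
  fun b b' => csum dA (fun a => rho a b a b').
Definition tensor (X Y : op) : op2 := fun a b a' b' => Cmul (X a a') (Y b b').

Definition log2 (x : R) : R := ln x / ln 2.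

(** "D^eps_H(alpha || beta) <= c", where
      D^eps_H(alpha||beta) = max_{Pi : 0<=Pi<=1, Tr[Pi alpha] >= 1-eps} -log2 Tr[Pi beta]
    (value +infinity when Tr[Pi beta] = 0 for a feasible Pi).
    A maximum is <= c iff every candidate value is <= c; a value +infinity
    is never <= c, hence the requirement 0 < Tr[Pi beta].
    Traces Tr[Pi alpha], Tr[Pi beta] of products of PSD operators are real;
    we take their real parts. *)
Definition DH_le (dA dB : nat) (eps : R) (alpha beta : op2) (c : R) : Prop :=
  forall Pi : op2, povm_elem2 dA dB Pi ->
    1 - eps <= re (trmul2 dA dB Pi alpha) ->
    0 < re (trmul2 dA dB Pi beta) /\ - log2 (re (trmul2 dA dB Pi beta)) <= c.

Definition IH_le (dA dB : nat) (eps : R) (rho : op2) (c : R) : Prop :=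
  DH_le dA dB eps rho (tensor (margA dA dB rho) (margB dA dB rho)) c.

(* Main.v *)
Require Import Defs.
From Stdlib Require Import Reals Lra.
Open Scope R_scope.

Lemma ln_le' x y : 0 < x -> x <= y -> ln x <= ln y.
Proof.
intros hx hxy; destruct (Rle_lt_or_eq_dec _ _ hxy) as [h|h].
- left; apply ln_increasing; assumption.
- rewrite h; right; reflexivity.
Qed.

Lemma final_real (eps L n : R) : 0 <= eps < 1 -> 1 <= n ->
  (1 - eps) * (1 - eps) / (16 * (n * n)) <= L ->
  0 < L /\ - log2 L <= 2 * log2 n + 3 * log2 (1 / (1 - eps)) + 6 * log2 3 - 4.
Proof.
intros [e0 e1] n1 hL.
set (a := 1 - eps).
assert (a0 : 0 < a) by (unfold a; lra).
assert (a1 : a <= 1) by (unfold a; lra).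
assert (n0 : 0 < n) by lra.
assert (lb0 : 0 < a * a / (16 * (n * n))).
{ apply Rdiv_lt_0_compat; [nra | nra]. }
assert (L0 : 0 < L) by (eapply Rlt_le_trans; [exact lb0 | exact hL]).
split; [exact L0|].
assert (hl : ln (a * a / (16 * (n * n))) <= ln L) by (apply ln_le'; [exact lb0 | exact hL]).
unfold Rdiv in hl.
rewrite (ln_mult (a * a)) in hl by (try apply Rinv_0_lt_compat; nra).
rewrite (ln_mult a a) in hl by lra.
rewrite ln_Rinv in hl by nra.
rewrite (ln_mult 16) in hl by nra.
rewrite (ln_mult n n) in hl by lra.
assert (h16 : ln 16 = 4 * ln 2).
{ replace 16 with (2 ^ 4) by (simpl; lra). rewrite ln_pow by lra. simpl; lra. }
assert (h256 : 8 * ln 2 <= 6 * ln 3).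
{ replace (8 * ln 2) with (ln (2 ^ 8)) by (rewrite ln_pow by lra; simpl; lra).
  replace (6 * ln 3) with (ln (3 ^ 6)) by (rewrite ln_pow by lra; simpl; lra).
  apply ln_le'; simpl; lra. }
assert (la : ln a <= 0) by (rewrite <- ln_1; apply ln_le'; lra).
assert (l2 : 0 < ln 2) by (generalize ln_lt_2; lra).
assert (hinv : ln (1 / a) = - ln a).
{ unfold Rdiv; rewrite Rmult_1_l, ln_Rinv by lra; reflexivity. }
unfold log2; rewrite hinv.
replace (- (ln L / ln 2)) with ((- ln L) * / ln 2) by (field; lra).
replace (2 * (ln n / ln 2) + 3 * (- ln a / ln 2) + 6 * (ln 3 / ln 2) - 4)
  with ((2 * ln n + 3 * - ln a + 6 * ln 3 - 4 * ln 2) * / ln 2) by (field; lra).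
apply Rmult_le_compat_r; [left; apply Rinv_0_lt_compat; lra | lra].
Qed.


From HB Require Import structures.
From mathcomp Require Import all_boot all_order all_algebra.
From mathcomp Require Import sesquilinear spectral mxtens ring complex Rstruct.

Module QM.
Set Implicit Arguments. Unset Strict Implicit. Unset Printing Implicit Defensive.
Import Order.TTheory GRing.Theory Num.Theory Num.Def.
Local Open Scope ring_scope.
Local Open Scope sesquilinear_scope.
Local Close Scope list_scope.


Section PSD.
Variable C : numClosedFieldType.

Definition psdmx n (X : 'M[C]_n) := forall v : 'rV[C]_n, 0 <= (v *m X *m v ^t*) 0 0.

Lemma qfE n (X : 'M[C]_n) (u v : 'rV[C]_n) :
  (u *m X *m v ^t*) 0 0 = \sum_i \sum_j u 0 i * X i j * (v 0 j)^*.
Proof.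
rewrite mxE; under eq_bigr => j _ do rewrite !mxE big_distrl /=.
rewrite exchange_big /=; apply: eq_bigr => i _; apply: eq_bigr => j _.
by [].
Qed.

Lemma ct_mul m n p (A : 'M[C]_(m,n)) (B : 'M[C]_(n,p)) : (A *m B) ^t* = B ^t* *m A ^t*.
Proof. by rewrite trmx_mul map_mxM. Qed.

Lemma ctK m n (A : 'M[C]_(m,n)) : A ^t* ^t* = A.
Proof. exact: trmxCK. Qed.

Lemma psd_congr m n (X : 'M[C]_n) (W : 'M[C]_(m,n)) :
  psdmx X -> psdmx (W *m X *m W ^t*).
Proof.
move=> hX v; have := hX (v *m W).
by rewrite ct_mul !mulmxA.
Qed.

Lemma psdD n (X Y : 'M[C]_n) : psdmx X -> psdmx Y -> psdmx (X + Y).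
Proof.
move=> hX hY v; rewrite mulmxDr mulmxDl mxE; exact: addr_ge0.
Qed.

Lemma psd0 n : psdmx (0 : 'M[C]_n).
Proof. by move=> v; rewrite mulmx0 mul0mx mxE. Qed.

Lemma psd_sum n (I : finType) (P : pred I) (F : I -> 'M[C]_n) :
  (forall i, P i -> psdmx (F i)) -> psdmx (\sum_(i | P i) F i).
Proof.
move=> h; elim/big_rec: _ => [|i x Pi hx]; first exact: psd0.
exact: psdD (h i Pi) hx.
Qed.

Lemma psdZ n (a : C) (X : 'M[C]_n) : 0 <= a -> psdmx X -> psdmx (a *: X).
Proof.
move=> ha hX v; rewrite -scalemxAr -scalemxAl mxE; exact: mulr_ge0.
Qed.

Lemma psd_diag n (X : 'M[C]_n) i : psdmx X -> 0 <= X i i.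
Proof.
move=> hX; pose e : 'rV[C]_n := delta_mx 0 i.
suff <- : (e *m X *m e^t*) 0 0 = X i i by exact: hX.
rewrite qfE (bigD1 i) //= addrC big1 ?add0r => [|j ji]; last first.
  by rewrite big1 // => k _; rewrite mxE (negbTE ji) andbF /= !mul0r.
rewrite (bigD1 i) //= addrC big1 ?add0r => [|j ji]; last first.
  by rewrite !mxE (negbTE ji) andbF /= conjC0 mulr0.
by rewrite !mxE !eqxx /= conjC1 mulr1 mul1r.
Qed.


Definition form n (X : 'M[C]_n) (u v : 'rV[C]_n) := (u *m X *m v ^t*) 0 0.

Lemma formDl n (X : 'M[C]_n) u u' v : form X (u + u') v = form X u v + form X u' v.
Proof. by rewrite /form !mulmxDl mxE. Qed.

Lemma formDr n (X : 'M[C]_n) u v v' : form X u (v + v') = form X u v + form X u v'.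
Proof. by rewrite /form linearD map_mxD mulmxDr mxE. Qed.

Lemma formZl n (X : 'M[C]_n) c u v : form X (c *: u) v = c * form X u v.
Proof. by rewrite /form -!scalemxAl mxE. Qed.

Lemma formZr n (X : 'M[C]_n) c u v : form X u (c *: v) = c^* * form X u v.
Proof. by rewrite /form linearZ map_mxZ -scalemxAr mxE. Qed.

Lemma form_e n (X : 'M[C]_n) i j : form X (delta_mx 0 i) (delta_mx 0 j) = X i j.
Proof.
rewrite /form qfE (bigD1 i) //= addrC big1 ?add0r => [|k ki]; last first.
  by rewrite big1 // => l _; rewrite mxE (negbTE ki) andbF /= !mul0r.
rewrite (bigD1 j) //= addrC big1 ?add0r => [|k kj]; last first.
  by rewrite !mxE (negbTE kj) andbF /= conjC0 mulr0.
by rewrite !mxE !eqxx /= conjC1 mulr1 mul1r.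
Qed.

Lemma psd_herm_entry n (X : 'M[C]_n) i j : psdmx X -> (X j i)^* = X i j.
Proof.
move=> hX; pose ei : 'rV[C]_n := delta_mx 0 i; pose ej : 'rV[C]_n := delta_mx 0 j.
have rii : X i i \is Num.real by apply: ger0_real; apply: psd_diag.
have rjj : X j j \is Num.real by apply: ger0_real; apply: psd_diag.
have h1 : form X (ei + ej) (ei + ej) \is Num.real by apply: ger0_real; apply: hX.
have h2 : form X (ei + 'i *: ej) (ei + 'i *: ej) \is Num.real by apply: ger0_real; apply: hX.
rewrite !formDl !formDr !formZl !formZr !form_e in h1 h2.
move/conj_Creal: h1; move/conj_Creal: h2.
rewrite !rmorphD !rmorphM /= conjCK conjCi (conj_Creal rii) (conj_Creal rjj).
set x := X i j; set y := X j i => h2 h1.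
have ii : 'i * 'i = -1 :> C by rewrite -expr2 sqrCi.
apply/eqP; rewrite -subr_eq0; apply/eqP.
set d1 := X i i + conjC x + (conjC y + X j j) - (X i i + x + (y + X j j)).
set d2 := X i i + 'i * conjC x + (- 'i * conjC y + - 'i * ('i * X j j)) -
    (X i i + - 'i * x + ('i * y + 'i * (- 'i * X j j))).
have hd1 : d1 = 0 by rewrite /d1 h1 subrr.
have hd2 : d2 = 0 by rewrite /d2 h2 subrr.
have -> : conjC y - x = (d1 + 'i * d2) / 2 - ('i * 'i + 1) * (conjC x - conjC y + x - y) / 2.
  rewrite /d1 /d2; field.
  by [].
by rewrite hd1 hd2 ii addNr !mul0r mulr0 add0r subr0 mul0r.
Qed.

Lemma psd_herm n (X : 'M[C]_n) : psdmx X -> X ^t* = X.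
Proof. by move=> hX; apply/matrixP => i j; rewrite !mxE psd_herm_entry. Qed.


Lemma psd_hermsym n (Y : 'M[C]_n) : psdmx Y -> Y \is hermsymmx.
Proof. by move=> hY; apply/is_hermitianmxP; rewrite expr0 scale1r psd_herm. Qed.

Lemma spectral_decomp n (Y : 'M[C]_n) : psdmx Y ->
  exists (P : 'M[C]_n) (d : 'rV[C]_n),
    [/\ P *m P ^t* = 1%:M, P ^t* *m P = 1%:M, Y = P ^t* *m diag_mx d *m P &
        forall i, 0 <= d 0 i].
Proof.
move=> hY.
have hn : Y \is normalmx by apply: hermitian_normalmx; apply: psd_hermsym.
have /orthomx_spectralP hd := hn.
set P := spectralmx Y in hd; set d := spectral_diag Y in hd.
have Pu : P \is unitarymx by apply: spectral_unitarymx.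
have hPP : P *m P ^t* = 1%:M by apply/unitarymxP.
have hPP' : P ^t* *m P = 1%:M.
  by rewrite -(invmx_unitary Pu) mulVmx // unitarymx_unit.
rewrite (invmx_unitary Pu) in hd.
exists P, d; split => // i.
have hD : diag_mx d = P *m Y *m P ^t*.
  by rewrite hd !mulmxA hPP mul1mx -mulmxA hPP mulmx1.
have := psd_diag i (psd_congr P hY); rewrite -hD mxE eqxx /=.
by rewrite mulr1n.
Qed.

Lemma trpsd n (X Y : 'M[C]_n) : psdmx X -> psdmx Y -> 0 <= \tr (X *m Y).
Proof.
move=> hX hY; have [P [d [hPP hPP' -> hd]]] := spectral_decomp hY.
rewrite !mulmxA mxtrace_mulC !mulmxA mul_mx_diag.
apply: sumr_ge0 => i _; rewrite mxE; apply: mulr_ge0 => //.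
exact: (psd_diag i (psd_congr P hX)).
Qed.


Section GForm.
Variables (n : nat) (Pi rho : 'M[C]_n).
Definition G (A B : 'M[C]_n) := \tr (Pi *m (A *m rho *m B ^t*)).

Lemma GDl A A' B : G (A + A') B = G A B + G A' B.
Proof. by rewrite /G !mulmxDl mulmxDr mxtraceD. Qed.
Lemma GDr A B B' : G A (B + B') = G A B + G A B'.
Proof. by rewrite /G linearD map_mxD mulmxDr mulmxDr mxtraceD. Qed.
Lemma GNl A B : G (- A) B = - G A B.
Proof. by rewrite /G mulNmx mulNmx mulmxN linearN. Qed.
Lemma GNr A B : G A (- B) = - G A B.
Proof. by rewrite /G linearN map_mxN mulmxN mulmxN linearN. Qed.
Lemma G0l B : G 0 B = 0.
Proof. by rewrite /G !mul0mx mulmx0 linear0. Qed.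
Lemma G0r A : G A 0 = 0.
Proof. by rewrite /G linear0 map_mx0 !mulmx0 linear0. Qed.

Lemma G_suml (I : finType) (S : pred I) (F : I -> 'M[C]_n) B :
  G (\sum_(i | S i) F i) B = \sum_(i | S i) G (F i) B.
Proof.
elim/big_rec2: _ => [|i x y _ h]; first exact: G0l.
by rewrite GDl h.
Qed.

Lemma G_sumr (I : finType) (S : pred I) (F : I -> 'M[C]_n) A :
  G A (\sum_(i | S i) F i) = \sum_(i | S i) G A (F i).
Proof.
elim/big_rec2: _ => [|i x y _ h]; first exact: G0r.
by rewrite GDr h.
Qed.

Hypothesis hPi : psdmx Pi.
Hypothesis hrho : psdmx rho.

Lemma G_ge0 A : 0 <= G A A.
Proof. by apply: trpsd => //; apply: psd_congr. Qed.

Lemma G_par A B : G (A + B) (A + B) <= 2 * G A A + 2 * G B B.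
Proof.
have h := G_ge0 (A - B).
rewrite -subr_ge0.
have -> : 2 * G A A + 2 * G B B - G (A + B) (A + B) = G (A - B) (A - B).
  rewrite !GDl !GDr !GNl !GNr; ring.
exact: h.
Qed.

Lemma G_pinch (I : finType) (S : pred I) (E : I -> 'M[C]_n) :
  G (\sum_(i | S i) E i) (\sum_(i | S i) E i) <=
  #|S|%:R * \sum_(i | S i) G (E i) (E i).
Proof.
rewrite -subr_ge0.
have h : 0 <= \sum_(i | S i) \sum_(j | S j) G (E i - E j) (E i - E j).
  by apply: sumr_ge0 => i _; apply: sumr_ge0 => j _; apply: G_ge0.
have e : \sum_(i | S i) \sum_(j | S j) G (E i - E j) (E i - E j) =
   2 * (#|S|%:R * \sum_(i | S i) G (E i) (E i) -
        G (\sum_(i | S i) E i) (\sum_(i | S i) E i)).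
  under eq_bigr => i _ do under eq_bigr => j _ do
     rewrite GDl !GDr !GNl !GNr opprK.
  have -> : G (\sum_(i | S i) E i) (\sum_(i | S i) E i) =
      \sum_(i | S i) \sum_(j | S j) G (E i) (E j).
    by rewrite G_suml; apply: eq_bigr => i _; rewrite G_sumr.
  under eq_bigr => i _ do rewrite !big_split /=.
  rewrite !big_split /=.
  set k := #|S|%:R; set T := \sum_(i | S i) G (E i) (E i).
  set M := \sum_(i | S i) \sum_(j | S j) G (E i) (E j).
  have h1 : \sum_(i | S i) \sum_(j | S j) G (E i) (E i) = k * T.
    by under eq_bigr => i _ do rewrite sumr_const; rewrite sumrMnl -mulr_natl.
  have h4 : \sum_(i | S i) \sum_(j | S j) G (E j) (E j) = k * T.
    by rewrite exchange_big; under eq_bigr => i _ do rewrite sumr_const; rewrite sumrMnl -mulr_natl.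
  have h2 : \sum_(i | S i) \sum_(j | S j) - G (E i) (E j) = - M.
    by rewrite /M -sumrN; apply: eq_bigr => i _; rewrite sumrN.
  have h3 : \sum_(i | S i) \sum_(j | S j) - G (E j) (E i) = - M.
    by rewrite exchange_big /M -sumrN; apply: eq_bigr => i _; rewrite sumrN.
  rewrite h1 h2 h3 h4; ring.
rewrite e in h.
by rewrite -(pmulr_rge0 _ (ltr0Sn _ 1)).
Qed.

End GForm.

End PSD.


Section Tens.
Variable C : numClosedFieldType.
Variables n m : nat.
Local Notation idx a b := (@mxtens_index n m (a, b)).

Lemma sum_idx (F : 'I_(n * m) -> C) : \sum_k F k = \sum_a \sum_b F (idx a b).
Proof.
rewrite pair_bigA /= (reindex (@mxtens_index n m)) /=; last first.
  by exists (@mxtens_unindex n m) => x _; [apply: mxtens_indexK | apply: mxtens_unindexK].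
by apply: eq_bigr => -[a b].
Qed.

Lemma mx4_eqP (X Y : 'M[C]_(n * m)) :
  (forall a b a' b', X (idx a b) (idx a' b') = Y (idx a b) (idx a' b')) -> X = Y.
Proof.
move=> h; apply/matrixP => k l.
rewrite -[k](@mxtens_unindexK n m) -[l](@mxtens_unindexK n m).
by case: (mxtens_unindex k) => a b; case: (mxtens_unindex l) => a' b'; exact: h.
Qed.

Lemma idx_eq a b a' b' : (idx a b == idx a' b') = (a == a') && (b == b').
Proof. by rewrite (inj_eq (can_inj (@mxtens_indexK n m))). Qed.

Lemma mulE4 (X Y : 'M[C]_(n * m)) i j :
  (X *m Y) i j = \sum_c \sum_d X i (idx c d) * Y (idx c d) j.
Proof. by rewrite mxE sum_idx. Qed.

Lemma trE4 (X : 'M[C]_(n * m)) : \tr X = \sum_a \sum_b X (idx a b) (idx a b).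
Proof. by rewrite /mxtrace sum_idx. Qed.

Lemma ctE p q (X : 'M[C]_(p,q)) i j : (X ^t*) i j = (X j i)^*.
Proof. by rewrite !mxE. Qed.

Definition margA (X : 'M[C]_(n * m)) : 'M[C]_n :=
  \matrix_(a, a') \sum_b X (idx a b) (idx a' b).
Definition margB (X : 'M[C]_(n * m)) : 'M[C]_m :=
  \matrix_(b, b') \sum_a X (idx a b) (idx a b').
Definition Km (a c : 'I_n) : 'M[C]_(n * m) := tensmx (delta_mx a c : 'M[C]_n) (1%:M : 'M[C]_m).

Lemma Km_E a c x y z w :
  Km a c (idx x y) (idx z w) = ((x == a) && (z == c))%:R * (y == w)%:R.
Proof. by rewrite /Km tensmxE !mxE. Qed.

Lemma rowK a c (X : 'M[C]_(n * m)) x y j :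
  (Km a c *m X) (idx x y) j = (x == a)%:R * X (idx c y) j.
Proof.
rewrite mulE4 (bigD1 c) //= addrC big1 ?add0r => [|z zc]; last first.
  by rewrite big1 // => w _; rewrite Km_E (negbTE zc) andbF !mul0r.
rewrite (bigD1 y) //= addrC big1 ?add0r => [|w wy]; last first.
  by rewrite Km_E [y == w]eq_sym (negbTE wy) mulr0 mul0r.
by rewrite Km_E !eqxx andbT mulr1.
Qed.

Lemma colK a c (X : 'M[C]_(n * m)) x' y' i :
  (X *m (Km a c)^t*) i (idx x' y') = (x' == a)%:R * X i (idx c y').
Proof.
rewrite mulE4 (bigD1 c) //= addrC big1 ?add0r => [|z zc]; last first.
  by rewrite big1 // => w _; rewrite ctE Km_E (negbTE zc) andbF !mul0r conjC0 mulr0.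
rewrite (bigD1 y') //= addrC big1 ?add0r => [|w wy]; last first.
  by rewrite ctE Km_E [y' == w]eq_sym (negbTE wy) mulr0 conjC0 mulr0.
rewrite ctE Km_E !eqxx andbT mulr1 mulrC; congr (_ * _).
by case: (x' == a); rewrite ?conjC1 ?conjC0.
Qed.

Lemma KXK a c a' c' (X : 'M[C]_(n * m)) x y x' y' :
  (Km a c *m X *m (Km a' c')^t*) (idx x y) (idx x' y') =
  (x == a)%:R * (x' == a')%:R * X (idx c y) (idx c' y').
Proof. by rewrite colK rowK mulrCA mulrA. Qed.


Lemma natr_andb (p q : bool) : (p && q)%:R = p%:R * q%:R :> C.
Proof. by case: p; case: q; rewrite ?mul0r ?mul1r. Qed.

Lemma sum_eqL k (b : 'I_k) (F : 'I_k -> C) : \sum_j (j == b)%:R * F j = F b.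
Proof.
under eq_bigr => j _ do rewrite mulr_natl mulrb.
by rewrite -big_mkcond big_pred1_eq.
Qed.

Lemma sum_eqR k (b : 'I_k) (F : 'I_k -> C) : \sum_j F j * (j == b)%:R = F b.
Proof. by under eq_bigr => j _ do rewrite mulrC; rewrite sum_eqL. Qed.

Lemma conj_nat (p : bool) : (p%:R : C)^* = p%:R.
Proof. by case: p; rewrite ?conjC1 ?conjC0. Qed.

Lemma sumK a (X : 'M[C]_(n * m)) :
  \sum_c Km a c *m X *m (Km a c)^t* = tensmx (delta_mx a a) (margB X).
Proof.
apply: mx4_eqP => x y x' y'; rewrite summxE tensmxE !mxE.
under eq_bigr => c _ do rewrite KXK.
by rewrite -big_distrr /= natr_andb.
Qed.

Lemma sumE : \sum_a Km a a = 1%:M.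
Proof.
apply: mx4_eqP => x y x' y'; rewrite summxE !mxE idx_eq natr_andb.
under eq_bigr => a _ do rewrite Km_E natr_andb.
rewrite -big_distrl /=; congr (_ * _).
under eq_bigr => a _ do rewrite eq_sym.
by rewrite sum_eqL eq_sym.
Qed.

Lemma tr_EXE a a' (X : 'M[C]_(n * m)) :
  \tr (Km a a *m X *m (Km a' a')^t*) = (a == a')%:R * margA X a a.
Proof.
rewrite trE4 mxE.
under eq_bigr => x _ do under eq_bigr => y _ do rewrite KXK.
under eq_bigr => x _ do rewrite -big_distrr /=.
under eq_bigr => x _ do rewrite -mulrA.
rewrite sum_eqL; case: (a =P a') => [<-|]; first by [].
by move=> _; rewrite !mul0r.
Qed.

Lemma diag_tens (l : 'rV[C]_n) (B : 'M[C]_m) :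
  tensmx (diag_mx l) B = \sum_a l 0 a *: tensmx (delta_mx a a) B.
Proof.
apply: mx4_eqP => x y x' y'; rewrite summxE tensmxE !mxE.
under eq_bigr => a _ do rewrite mxE tensmxE mxE natr_andb.
rewrite (bigD1 x) //= addrC big1 ?add0r => [|a ax]; last first.
  by rewrite [x == a]eq_sym (negbTE ax) !mul0r mulr0.
rewrite eqxx mul1r; case: (x =P x') => [<-|nx].
  by rewrite eqxx mulr1n mul1r.
by rewrite eq_sym (introF eqP nx) mulr0n !mul0r mulr0.
Qed.

Definition Lb (b : 'I_m) : 'M[C]_(n, n * m) := \matrix_(a, k) (k == idx a b)%:R.

Lemma margA_L (X : 'M[C]_(n * m)) : margA X = \sum_b Lb b *m X *m (Lb b)^t*.
Proof.
apply/matrixP => a a'; rewrite summxE !mxE; apply: eq_bigr => b _.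
rewrite mxE; under eq_bigr => k _ do rewrite !mxE conj_nat.
under eq_bigr => k _ do under eq_bigr => l _ do rewrite mxE.
by under eq_bigr => k _ do rewrite sum_eqL; rewrite sum_eqR.
Qed.

Lemma psd_margA (X : 'M[C]_(n * m)) : psdmx X -> psdmx (margA X).
Proof.
move=> hX; rewrite margA_L; apply: psd_sum => b _; exact: psd_congr.
Qed.

End Tens.


Section Core.
Variable C : numClosedFieldType.
Variables n m : nat.

Lemma ct1 k : (1%:M : 'M[C]_k) ^t* = 1%:M.
Proof. by rewrite trmx1 map_mx1. Qed.

Lemma GB (Pi Pi' rho A B : 'M[C]_(n * m)) :
  G (Pi - Pi') rho A B = G Pi rho A B - G Pi' rho A B.
Proof. by rewrite /G mulmxBl linearB. Qed.

Lemma G1 (Pi rho : 'M[C]_(n * m)) : G Pi rho 1%:M 1%:M = \tr (Pi *m rho).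
Proof. by rewrite /G ct1 mul1mx mulmx1. Qed.

Lemma trG_sum (Pi : 'M[C]_(n * m)) (I : finType) (F : I -> 'M[C]_(n * m)) (c : I -> C) :
  \tr (Pi *m \sum_i c i *: F i) = \sum_i c i * \tr (Pi *m F i).
Proof.
rewrite mulmx_sumr raddf_sum; apply: eq_bigr => i _.
by rewrite /= -scalemxAr mxtraceZ.
Qed.

Lemma core_diag (rho Pi : 'M[C]_(n * m)) (l : 'rV[C]_n) (e : C) :
  psdmx rho -> psdmx Pi -> psdmx (1%:M - Pi) -> margA rho = diag_mx l ->
  (0 < n)%N -> 0 < e -> e <= \tr (Pi *m rho) ->
  e ^+ 2 / (16 * n%:R ^+ 2) <= \tr (Pi *m tensmx (margA rho) (margB rho)).
Proof.
move=> hrho hPi hPi' hl n0 e0 he.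
have lge0 a : 0 <= l 0 a.
  have := psd_diag a (psd_margA hrho); rewrite hl mxE eqxx.
  by rewrite mulr1n.
have nR : 0 < n%:R :> C by rewrite ltr0n.
pose t := e / (4 * n%:R).
have t0 : 0 <= t by apply: divr_ge0; [exact: ltW | apply: mulr_ge0; [exact: ler0n | exact: ltW]].
pose S : pred 'I_n := fun a => t <= l 0 a.
pose E a := @Km C n m a a.
pose Y := \sum_(a | S a) G Pi rho (E a) (E a).
have Y0 : 0 <= Y by apply: sumr_ge0 => a _; apply: G_ge0.
have hb : t * Y <= \tr (Pi *m tensmx (margA rho) (margB rho)).
  rewrite hl diag_tens trG_sum.
  have hW a : \tr (Pi *m tensmx (delta_mx a a) (margB rho)) =
     \sum_c G Pi rho (@Km C n m a c) (@Km C n m a c).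
    by rewrite -sumK mulmx_sumr raddf_sum.
  have W0 a : G Pi rho (E a) (E a) <= \tr (Pi *m tensmx (delta_mx a a) (margB rho)).
    rewrite hW (bigD1 a) //= lerDl; apply: sumr_ge0 => c _; exact: G_ge0.
  rewrite (bigID S) /= -[t * Y]addr0; apply: lerD; last first.
    apply: sumr_ge0 => a _; apply: mulr_ge0 => //.
    by apply: le_trans (W0 a); apply: G_ge0.
  rewrite /Y mulr_sumr; apply: ler_sum => a Sa.
  by apply: ler_pM => //; first [exact: G_ge0 | exact: W0].
pose P := \sum_(a | S a) E a; pose Q := \sum_(a | ~~ S a) E a.
have PQ : P + Q = 1%:M.
  by rewrite /P /Q -(@sumE C n m) [RHS](bigID S) /=.
have cardS (A : pred 'I_n) : (#|A| <= n)%N by apply: leq_trans (max_card A) _; rewrite card_ord.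
have hx : G Pi rho P P <= n%:R * Y.
  apply: le_trans (G_pinch hPi hrho S E) _.
  by apply: ler_wpM2r => //; rewrite ler_nat.
have hpar : \tr (Pi *m rho) <= 2 * G Pi rho P P + 2 * G Pi rho Q Q.
  by rewrite -G1 -PQ; apply: G_par.
have hQ : G Pi rho Q Q <= G 1%:M rho Q Q.
  by rewrite -subr_ge0 -GB; apply: G_ge0.
have hQ1 : G 1%:M rho Q Q = \sum_(a | ~~ S a) l 0 a.
  rewrite G_suml; apply: eq_bigr => a Sa; rewrite G_sumr (bigD1 a) //= addrC big1 ?add0r.
    by rewrite /G mul1mx tr_EXE eqxx mul1r hl mxE eqxx mulr1n.
  move=> a' /andP [_ a'a].
  by rewrite /G mul1mx tr_EXE eq_sym (negbTE a'a) mul0r.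
have hQt : \sum_(a | ~~ S a) l 0 a <= n%:R * t.
  apply: le_trans (_ : \sum_(a | ~~ S a) t <= _).
    apply: ler_sum => a Sa; apply: ltW.
    by rewrite real_ltNge ?ger0_real.
  rewrite sumr_const -[t *+ _]mulr_natl; apply: ler_wpM2r => //.
  by rewrite ler_nat; apply: cardS.
have n0' : n%:R != 0 :> C by rewrite lt0r_neq0.
have ht : n%:R * t = e / 4 by rewrite /t; field.
have h1 : e <= 2 * G Pi rho P P + 2 * (e / 4).
  apply: le_trans he (le_trans hpar _); rewrite lerD2l -ht.
  by apply: ler_wpM2l => //; apply: le_trans hQ _; rewrite hQ1.
have h2 : e / 4 <= G Pi rho P P.
  rewrite -subr_ge0.
  have -> : G Pi rho P P - e / 4 = (2 * G Pi rho P P + 2 * (e / 4) - e) / 2 by field.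
  by apply: divr_ge0; [rewrite subr_ge0 | apply: ler0n].
have h3 : e / (4 * n%:R) <= Y.
  rewrite ler_pdivrMr; last by rewrite mulr_gt0 // ltr0n.
  have := le_trans h2 hx; rewrite ler_pdivrMr // => h.
  by apply: le_trans h _; rewrite mulrC mulrA [Y * _]mulrC.
apply: le_trans hb.
have -> : e ^+ 2 / (16 * n%:R ^+ 2) = t * (e / (4 * n%:R)).
  by rewrite /t; field.
exact: ler_wpM2l.
Qed.

End Core.


Section Rot.
Variable C : numClosedFieldType.
Variables n m : nat.
Local Notation idx a b := (@mxtens_index n m (a, b)).

Definition Vm (U : 'M[C]_n) : 'M[C]_(n * m) := tensmx U (1%:M : 'M[C]_m).

Lemma rowV U (X : 'M[C]_(n * m)) x y j :
  (Vm U *m X) (idx x y) j = \sum_c U x c * X (idx c y) j.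
Proof.
rewrite mulE4; apply: eq_bigr => c _.
under eq_bigr => d _ do rewrite /Vm tensmxE mxE -mulrA mulrCA.
by under eq_bigr => d _ do rewrite eq_sym; rewrite (sum_eqL y (fun d => U x c * X (idx c d) j)).
Qed.

Lemma colV U (X : 'M[C]_(n * m)) x' y' i :
  (X *m (Vm U)^t*) i (idx x' y') = \sum_c X i (idx c y') * (U x' c)^*.
Proof.
rewrite mulE4; apply: eq_bigr => c _.
under eq_bigr => d _ do rewrite ctE /Vm tensmxE mxE rmorphM /= conj_nat mulrA.
by under eq_bigr => d _ do rewrite eq_sym; rewrite (sum_eqR y' (fun d => X i (idx c d) * conjC (U x' c))).
Qed.

Lemma VXV U (X : 'M[C]_(n * m)) x y x' y' :
  (Vm U *m X *m (Vm U)^t*) (idx x y) (idx x' y') =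
  \sum_c' (\sum_c U x c * X (idx c y) (idx c' y')) * (U x' c')^*.
Proof. by rewrite colV; apply: eq_bigr => c' _; rewrite rowV. Qed.


Lemma margA_V U (X : 'M[C]_(n * m)) :
  margA (Vm U *m X *m (Vm U)^t*) = U *m margA X *m U^t*.
Proof.
apply/matrixP => a a'; rewrite !mxE.
under eq_bigr => y _ do rewrite VXV.
rewrite exchange_big; apply: eq_bigr => c' _.
rewrite ctE -big_distrl /=; congr (_ * _).
rewrite mxE exchange_big; apply: eq_bigr => c _.
by rewrite mxE big_distrr.
Qed.

Lemma margB_V U (X : 'M[C]_(n * m)) : U^t* *m U = 1%:M ->
  margB (Vm U *m X *m (Vm U)^t*) = margB X.
Proof.
move=> hU; apply/matrixP => b b'; rewrite !mxE.
have h c' c : \sum_x (U x c')^* * U x c = (c' == c)%:R.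
  have := congr1 (fun M : 'M[C]_n => M c' c) hU; rewrite /= !mxE => <-.
  by apply: eq_bigr => x _; rewrite !mxE.
under eq_bigr => x _ do rewrite VXV.
under eq_bigr => x _ do under eq_bigr => c' _ do rewrite big_distrl /=.
rewrite exchange_big /=.
under eq_bigr => c' _ do rewrite exchange_big /=.
have e c' c : \sum_x U x c * X (idx c b) (idx c' b') * (U x c')^* = X (idx c b) (idx c' b') * (c' == c)%:R.
  by rewrite -h big_distrr; apply: eq_bigr => x _ /=; ring.
under eq_bigr => c' _ do under eq_bigr => c _ do rewrite e.
rewrite exchange_big /=; apply: eq_bigr => c _.
by rewrite (sum_eqR c (fun c' => X (idx c b) (idx c' b'))).
Qed.

Lemma tens_ct (A : 'M[C]_n) (B : 'M[C]_m) : (tensmx A B)^t* = tensmx (A^t*) (B^t*).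
Proof. by apply: mx4_eqP => x y x' y'; rewrite ctE !tensmxE !ctE rmorphM. Qed.

Lemma tens1 : tensmx (1%:M : 'M[C]_n) (1%:M : 'M[C]_m) = 1%:M.
Proof. by apply: mx4_eqP => x y x' y'; rewrite tensmxE !mxE idx_eq natr_andb. Qed.


Lemma trV (V A B : 'M[C]_(n * m)) : V^t* *m V = 1%:M ->
  \tr (V *m A *m V^t* *m (V *m B *m V^t*)) = \tr (A *m B).
Proof.
move=> hV; rewrite !mulmxA -[V *m A *m V^t* *m V]mulmxA hV mulmx1.
by rewrite mxtrace_mulC !mulmxA hV mul1mx.
Qed.

Lemma core (rho Pi : 'M[C]_(n * m)) (e : C) :
  psdmx rho -> psdmx Pi -> psdmx (1%:M - Pi) -> (0 < n)%N -> 0 < e ->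
  e <= \tr (Pi *m rho) ->
  e ^+ 2 / (16 * n%:R ^+ 2) <= \tr (Pi *m tensmx (margA rho) (margB rho)).
Proof.
move=> hrho hPi hPi' n0 e0 he.
have [P [d [h1 h2 hA hd]]] := spectral_decomp (psd_margA hrho).
pose V : 'M[C]_(n * m) := Vm P.
have VV : V *m V^t* = 1%:M by rewrite /V /Vm tens_ct ct1 tensmx_mul h1 mulmx1 tens1.
have VV' : V^t* *m V = 1%:M by rewrite /V /Vm tens_ct ct1 tensmx_mul h2 mulmx1 tens1.
have hAV : margA (V *m rho *m V^t*) = P *m margA rho *m P^t* by apply: margA_V.
have hBV : margB (V *m rho *m V^t*) = margB rho by apply: margB_V.
have := @core_diag C n m (V *m rho *m V^t*) (V *m Pi *m V^t*) d e (psd_congr V hrho)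
  (psd_congr V hPi).
have -> : 1%:M - V *m Pi *m V^t* = V *m (1%:M - Pi) *m V^t*.
  by rewrite mulmxBr mulmxBl mulmx1 VV.
move=> /(_ (psd_congr V hPi')).
have hdg : margA (V *m rho *m V^t*) = diag_mx d.
  by rewrite hAV hA !mulmxA h1 mul1mx -mulmxA h1 mulmx1.
move=> /(_ hdg n0 e0); rewrite trV // => /(_ he).
rewrite hAV hBV.
have -> : tensmx (P *m margA rho *m P ^t*) (margB rho) =
    V *m tensmx (margA rho) (margB rho) *m V^t*.
  by rewrite /V /Vm tens_ct ct1 !tensmx_mul mul1mx mulmx1.
by rewrite trV.
Qed.
End Rot.


Section Swap.
Variable C : numClosedFieldType.
Variables n m : nat.
Local Notation idx a b := (@mxtens_index n m (a, b)).
Local Notation idx' b a := (@mxtens_index m n (b, a)).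

Definition Sw : 'M[C]_(m * n, n * m) :=
  \matrix_(i, k) (((mxtens_unindex i).2 == (mxtens_unindex k).1) &&
                  ((mxtens_unindex i).1 == (mxtens_unindex k).2))%:R.

Lemma Sw_E a b a' b' : Sw (idx' b a) (idx a' b') = ((a == a') && (b == b'))%:R.
Proof. by rewrite mxE !mxtens_indexK. Qed.

Lemma rowS (X : 'M[C]_(n * m, n * m)) a b j : (Sw *m X) (idx' b a) j = X (idx a b) j.
Proof.
rewrite mxE sum_idx.
under eq_bigr => c _ do under eq_bigr => d _ do rewrite Sw_E natr_andb -mulrA.
under eq_bigr => c _ do rewrite -big_distrr /=.
under eq_bigr => c _ do under eq_bigr => d _ do rewrite [b == d]eq_sym.
under eq_bigr => c _ do rewrite (sum_eqL b (fun d => X (idx c d) j)).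
under eq_bigr => c _ do rewrite [a == c]eq_sym.
by rewrite (sum_eqL a (fun c => X (idx c b) j)).
Qed.

Lemma colS (X : 'M[C]_(m * n, n * m)) a' b' i : (X *m Sw^t*) i (idx' b' a') = X i (idx a' b').
Proof.
rewrite mxE sum_idx.
under eq_bigr => c _ do under eq_bigr => d _ do rewrite ctE Sw_E conj_nat natr_andb mulrA.
under eq_bigr => c _ do under eq_bigr => d _ do rewrite [b' == d]eq_sym.
under eq_bigr => c _ do rewrite (sum_eqR b' (fun d => X i (idx c d) * (a' == c)%:R)).
under eq_bigr => c _ do rewrite [a' == c]eq_sym.
by rewrite (sum_eqR a' (fun c => X i (idx c b'))).
Qed.

Lemma SXS (X : 'M[C]_(n * m)) a b a' b' :
  (Sw *m X *m Sw^t*) (idx' b a) (idx' b' a') = X (idx a b) (idx a' b').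
Proof. by rewrite colS rowS. Qed.


Lemma mx4_eqP' (X Y : 'M[C]_(m * n)) :
  (forall a b a' b', X (idx' b a) (idx' b' a') = Y (idx' b a) (idx' b' a')) -> X = Y.
Proof. by move=> h; apply: mx4_eqP => b a b' a'; exact: h. Qed.

Lemma SS1 : Sw *m Sw^t* = 1%:M.
Proof.
apply: mx4_eqP' => a b a' b'.
have := SXS (1%:M) a b a' b'; rewrite mulmx1 => ->.
by rewrite !mxE !idx_eq andbC.
Qed.

Lemma S1S : Sw^t* *m Sw = 1%:M.
Proof.
apply: mx4_eqP => a b a' b'; rewrite mxE !mxE sum_idx idx_eq.
under eq_bigr => b'' _ do under eq_bigr => a'' _ do rewrite !mxE !mxtens_indexK /= conj_nat.
rewrite (bigD1 b) //= addrC big1 ?add0r => [|b'' hb]; last first.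
  by rewrite big1 // => a'' _; rewrite (negbTE hb) andbF mul0r.
rewrite (bigD1 a) //= addrC big1 ?add0r => [|a'' ha]; last first.
  by rewrite (negbTE ha) mul0r.
by rewrite !eqxx /= mul1r.
Qed.

Lemma margA_S (X : 'M[C]_(n * m)) : margA (Sw *m X *m Sw^t*) = margB X.
Proof. by apply/matrixP => b b'; rewrite !mxE; apply: eq_bigr => a _; rewrite SXS. Qed.

Lemma margB_S (X : 'M[C]_(n * m)) : margB (Sw *m X *m Sw^t*) = margA X.
Proof. by apply/matrixP => a a'; rewrite !mxE; apply: eq_bigr => b _; rewrite SXS. Qed.

Lemma tens_S (A : 'M[C]_n) (B : 'M[C]_m) :
  Sw *m tensmx A B *m Sw^t* = tensmx B A.
Proof. by apply: mx4_eqP' => a b a' b'; rewrite SXS !tensmxE mulrC. Qed.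

Lemma trW p q (W : 'M[C]_(p, q)) (A B : 'M[C]_q) : W^t* *m W = 1%:M ->
  \tr (W *m A *m W^t* *m (W *m B *m W^t*)) = \tr (A *m B).
Proof.
move=> hV; rewrite !mulmxA -[W *m A *m W^t* *m W]mulmxA hV mulmx1.
by rewrite mxtrace_mulC !mulmxA hV mul1mx.
Qed.

Lemma coreB (rho Pi : 'M[C]_(n * m)) (e : C) :
  psdmx rho -> psdmx Pi -> psdmx (1%:M - Pi) -> (0 < m)%N -> 0 < e ->
  e <= \tr (Pi *m rho) ->
  e ^+ 2 / (16 * m%:R ^+ 2) <= \tr (Pi *m tensmx (margA rho) (margB rho)).
Proof.
move=> hrho hPi hPi' m0 e0 he.
have := @core C m n (Sw *m rho *m Sw^t*) (Sw *m Pi *m Sw^t*) e (psd_congr Sw hrho)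
  (psd_congr Sw hPi).
have -> : 1%:M - Sw *m Pi *m Sw^t* = Sw *m (1%:M - Pi) *m Sw^t*.
  by rewrite mulmxBr mulmxBl mulmx1 SS1.
move=> /(_ (psd_congr Sw hPi') m0 e0); rewrite trW ?S1S // => /(_ he).
by rewrite margA_S margB_S -tens_S trW ?S1S.
Qed.

End Swap.


Definition toC (z : Defs.C) : R[i] := (Defs.re z +i* Defs.im z)%C.
Definition ofC (z : R[i]) : Defs.C := mkC (complex.Re z) (complex.Im z).
Lemma toC_add x y : toC (Cadd x y) = toC x + toC y. Proof. reflexivity. Qed.
Lemma toC_mul x y : toC (Cmul x y) = toC x * toC y. Proof. reflexivity. Qed.
Lemma toC_conj x : toC (Cconj x) = conjC (toC x). Proof. reflexivity. Qed.
Lemma toC0 : toC C0 = 0. Proof. reflexivity. Qed.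
Lemma toC1 : toC (mkC 1 0) = 1. Proof. reflexivity. Qed.
Lemma toC_ofC z : toC (ofC z) = z. Proof. by case: z. Qed.
Lemma toC_neg x : toC (mkC (- Defs.re x) (- Defs.im x)) = - toC x. Proof. reflexivity. Qed.

Lemma seq_iota s k : List.seq s k = iota s k.
Proof. by elim: k s => //= k IH s; rewrite IH. Qed.

Lemma toC_csum k f : toC (csum k f) = \sum_(i < k) toC (f i).
Proof.
have h l : toC (List.fold_right Cadd C0 (List.map f l)) = \sum_(i <- l) toC (f i).
  by elim: l => [|x l IH] /=; [rewrite big_nil | rewrite big_cons toC_add IH].
by rewrite /csum h seq_iota -(big_mkord xpredT (fun i => toC (f i))) /index_iota subn0.
Qed.

Lemma eqbE (x y : nat) : Nat.eqb x y = (x == y).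
Proof. by case: (Nat.eqb_spec x y) => [->|h]; [rewrite eqxx | apply/esym/eqP]. Qed.

Section Flat.
Variables dA dB : nat.
Local Notation idx a b := (@mxtens_index dA dB (a, b)).

Definition flat (X : op2) : 'M[R[i]]_(dA * dB) :=
  \matrix_(i, j) toC (X (mxtens_unindex i).1 (mxtens_unindex i).2
                        (mxtens_unindex j).1 (mxtens_unindex j).2).

Lemma flatE X a b a' b' : flat X (idx a b) (idx a' b') = toC (X a b a' b').
Proof. by rewrite mxE !mxtens_indexK. Qed.

Lemma trmul2E X Y : toC (trmul2 dA dB X Y) = \tr (flat X *m flat Y).
Proof.
rewrite /trmul2 toC_csum trE4; apply: eq_bigr => a _; rewrite toC_csum.
apply: eq_bigr => b _; rewrite mulE4 toC_csum; apply: eq_bigr => a' _.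
rewrite toC_csum; apply: eq_bigr => b' _.
by rewrite toC_mul !flatE.
Qed.

Lemma tr2E X : toC (tr2 dA dB X) = \tr (flat X).
Proof.
rewrite /tr2 toC_csum trE4; apply: eq_bigr => a _; rewrite toC_csum.
by apply: eq_bigr => b _; rewrite flatE.
Qed.

Lemma tensorE X : flat (tensor (Defs.margA dA dB X) (Defs.margB dA dB X)) =
  tensmx (margA (flat X)) (margB (flat X)).
Proof.
apply: mx4_eqP => a b a' b'; rewrite flatE tensmxE !mxE /tensor toC_mul.
rewrite /Defs.margA /Defs.margB !toC_csum; congr (_ * _).
  by apply: eq_bigr => c _; rewrite flatE.
by apply: eq_bigr => c _; rewrite flatE.
Qed.

Lemma sub2E X : flat (sub2 id2 X) = 1%:M - flat X.
Proof.
apply: mx4_eqP => a b a' b'; rewrite flatE !mxE idx_eq /sub2 toC_add toC_neg.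
rewrite !mxtens_indexK /id2 !eqbE /=.
by case: ifP => _; rewrite ?toC1 ?toC0.
Qed.

Lemma psd2E X : psd2 dA dB X -> psdmx (flat X).
Proof.
move=> h v.
pose w (a b : nat) : Defs.C :=
  match (insub a : option 'I_dA), (insub b : option 'I_dB) with
  | Some a', Some b' => ofC (conjC (v 0 (idx a' b')))
  | _, _ => C0 end.
have hw (a : 'I_dA) (b : 'I_dB) : toC (w a b) = conjC (v 0 (idx a b)).
  by rewrite /w !valK toC_ofC.
have [him hre] := h w.
have e : toC (qform2 dA dB X w) = (v *m flat X *m v^t*) 0 0.
  rewrite qfE sum_idx /qform2 toC_csum; apply: eq_bigr => a _.
  rewrite toC_csum; apply: eq_bigr => b _; rewrite sum_idx toC_csum.
  apply: eq_bigr => a' _; rewrite toC_csum; apply: eq_bigr => b' _.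
  by rewrite !toC_mul toC_conj !hw conjCK flatE mulrA.
rewrite -e lecE /= him eqxx /=.
by apply/RleP.
Qed.

End Flat.


Lemma bound_conv (eps L : R) (N : nat) :
  (1 - eps) ^+ 2 / (16 * N%:R ^+ 2) <= L ->
  Rle (Rdiv (Rmult (Rminus 1 eps) (Rminus 1 eps)) (Rmult 16 (Rmult (INR N) (INR N)))) L.
Proof.
move/RleP; rewrite INRE.
have -> : (16 : R)%R = 16%:R by rewrite -INRE; simpl; Lra.lra.
by rewrite !expr2.
Qed.

Lemma main_bound (dA dB : nat) (eps : R) (rho Pi : op2) :
  Rle 0 eps /\ Rlt eps 1 -> is_state2 dA dB rho -> povm_elem2 dA dB Pi ->
  Rle (Rminus 1 eps) (Defs.re (trmul2 dA dB Pi rho)) ->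
  (0 < dA)%N /\ (0 < dB)%N /\
  forall N, (N = dA \/ N = dB) ->
  Rle (Rdiv (Rmult (Rminus 1 eps) (Rminus 1 eps)) (Rmult 16 (Rmult (INR N) (INR N))))
    (Defs.re (trmul2 dA dB Pi (tensor (Defs.margA dA dB rho) (Defs.margB dA dB rho)))).
Proof.
move=> [he0 he1] [hrho htr] [hPi hPi'] hT.
have psr := psd2E hrho; have psp := psd2E hPi.
have psp' : psdmx (1%:M - flat dA dB Pi) by rewrite -sub2E; apply: psd2E.
have tr1 : \tr (flat dA dB rho) = 1 by rewrite -tr2E htr.
have hdA : (0 < dA)%N.
  rewrite lt0n; apply/eqP => h0; move: tr1; rewrite trE4 big1 => [/esym/eqP|a _].
    by rewrite oner_eq0.
  by move: (leq_trans (ltn_ord a) (eq_leq h0)); rewrite ltn0.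
have hdB : (0 < dB)%N.
  rewrite lt0n; apply/eqP => h0; move: tr1; rewrite trE4 big1 => [/esym/eqP|a _].
    by rewrite oner_eq0.
  by rewrite big1 // => b _; move: (leq_trans (ltn_ord b) (eq_leq h0)); rewrite ltn0.
split => //; split => // N hN.
pose e : R[i] := ((1 - eps : R)%:C)%C.
have e0 : 0 < e.
  rewrite ltcE /= eqxx /=; apply/RltP; change (Rlt R0 (Rminus R1 eps)); Lra.lra.
have he : e <= \tr (flat dA dB Pi *m flat dA dB rho).
  have t0 := trpsd psp psr.
  move: t0; rewrite -trmul2E !lecE /= => /andP [/eqP -> _].
  by rewrite eqxx /=; apply/RleP.
set T := trmul2 dA dB Pi _.
have hT' : toC T = \tr (flat dA dB Pi *m tensmx (margA (flat dA dB rho)) (margB (flat dA dB rho))).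
  by rewrite trmul2E tensorE.
have key : e ^+ 2 / (16 * N%:R ^+ 2) <= toC T.
  rewrite hT'; case: hN => ->.
    exact: core psr psp psp' hdA e0 he.
  exact: coreB psr psp psp' hdB e0 he.
apply: bound_conv.
have ee : e ^+ 2 / (16 * N%:R ^+ 2) = (((1 - eps) ^+ 2 / (16 * N%:R ^+ 2))%:C)%C.
  rewrite fmorph_div rmorphXn rmorphM /= (rmorphXn (real_complex R)) !(rmorph_nat (real_complex R)).
  done.
move: key; rewrite ee lecE => /andP [_].
by [].
Qed.

End QM.

Open Scope R_scope.

Theorem proposition1 (dA dB : nat) (eps : R) (rho : op2) :
  0 <= eps < 1 ->
  is_state2 dA dB rho ->
  IH_le dA dB eps rho
    (2 * log2 (INR (Nat.min dA dB)) + 3 * log2 (1 / (1 - eps)) + 6 * log2 3 - 4).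
Proof.
intros heps hs Pi hPi hT.
destruct (QM.main_bound heps hs hPi hT) as [hA [hB hN]].
destruct (Nat.le_ge_cases dA dB) as [h|h].
- rewrite (Nat.min_l _ _ h).
  apply final_real; [exact heps| |exact (hN dA (or_introl erefl))].
  apply (le_INR 1). apply/leP. exact hA.
- rewrite (Nat.min_r _ _ h).
  apply final_real; [exact heps| |exact (hN dB (or_intror erefl))].
  apply (le_INR 1). apply/leP. exact hB.
Qed.
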